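(* Let $n\ge 1$, let $K,T\in\mathcal S_n\setminus\{\emptyset,\mathbb R^n\}$ and let $\lambda\in(0,1)$. Then $(1-\lambda)K+\lambda T\in\mathcal S_n$ and \[ \big((1-\lambda)K+\lambda T\big)^c=(1-\lambda)K^c+\lambda T^c, \] where $+$ denotes Minkowski addition.
   Context: $B(x,r)=\{y\in\mathbb R^n:\|y-x\|_2\le r\}$ is the closed Euclidean ball. For $A\subseteq\mathbb R^n$, its $c$-dual is $A^c=\{y:\|x-y\|_2\le 1\ \forall x\in A\}=\bigcap_{x\in A}B(x,1)$ (with $\emptyset^c=\mathbb R^n$). $\mathcal S_n$ (ball-bodies) is the class of all sets of the form $\bigcap_{x\in A}B(x,1)$ for some $A\subseteq\mathbb R^n$, i.e. the image of the map $A\mapsto A^c$; it contains $\emptyset$ and $\mathbb R^n$. *)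

(* Defs.v *)
From HB Require Import structures.
From mathcomp Require Import all_boot all_order all_algebra.
From mathcomp Require Import classical_sets reals.
Set Implicit Arguments. Unset Strict Implicit. Unset Printing Implicit Defensive.
Import Order.TTheory GRing.Theory Num.Theory.
Local Open Scope ring_scope.
Local Open Scope classical_set_scope.

Definition enorm {R : realType} {n : nat} (x : 'rV[R]_n) : R :=
  Num.sqrt (\sum_(i < n) (x 0 i) ^+ 2).

Definition cball {R : realType} {n : nat} (x : 'rV[R]_n) (r : R) : set 'rV[R]_n :=
  [set y | enorm (y - x) <= r].

(* c-dual: A^c = intersection over x in A of B(x,1); empty^c = R^n *)
Definition cdual {R : realType} {n : nat} (A : set 'rV[R]_n) : set 'rV[R]_n :=
  \bigcap_(x in A) cball x 1.

Definition ball_body {R : realType} {n : nat} (K : set 'rV[R]_n) : Prop :=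
  exists A : set 'rV[R]_n, K = cdual A.

Definition mink {R : realType} {n : nat} (a : R) (K : set 'rV[R]_n)
  (b : R) (T : set 'rV[R]_n) : set 'rV[R]_n :=
  [set a *: x + b *: y | x in K & y in T].

(* Main.v *)
Require Import Defs.
From HB Require Import structures.
From mathcomp Require Import all_boot all_order all_algebra.
From mathcomp Require Import classical_sets reals.
From mathcomp Require Import all_classical all_reals all_analysis.
From mathcomp Require Import ring lra.
Import Order.TTheory GRing.Theory Num.Theory.
Import numFieldNormedType.Exports.
Local Open Scope ring_scope.
Local Open Scope classical_set_scope.
Section Dot.
Variables (R : realType) (n : nat).
Implicit Types (x y z : 'rV[R]_n) (A B K : set 'rV[R]_n).

Definition dot x y : R := \sum_i x 0 i * y 0 i.

Lemma dotC x y : dot x y = dot y x.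
Proof. by apply: eq_bigr => i _; rewrite mulrC. Qed.
Lemma dotDl x y z : dot (x + y) z = dot x z + dot y z.
Proof. by rewrite /dot -big_split; apply: eq_bigr => i _; rewrite mxE mulrDl. Qed.
Lemma dotZl a x y : dot (a *: x) y = a * dot x y.
Proof. by rewrite /dot mulr_sumr; apply: eq_bigr => i _; rewrite mxE mulrA. Qed.
Lemma dotNl x y : dot (- x) y = - dot x y.
Proof. by rewrite /dot -sumrN; apply: eq_bigr => i _; rewrite mxE mulNr. Qed.
Lemma dotDr x y z : dot z (x + y) = dot z x + dot z y.
Proof. by rewrite !(dotC z) dotDl. Qed.
Lemma dotZr a x y : dot y (a *: x) = a * dot y x.
Proof. by rewrite !(dotC y) dotZl. Qed.
Lemma dotNr x y : dot y (- x) = - dot y x.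
Proof. by rewrite !(dotC y) dotNl. Qed.
Lemma dot_ge0 x : 0 <= dot x x.
Proof. by apply: sumr_ge0 => i _; rewrite -expr2 sqr_ge0. Qed.
Lemma dot_eq0 x : dot x x = 0 -> x = 0.
Proof.
move/eqP; rewrite psumr_eq0 => [/allP H|i _]; last by rewrite -expr2 sqr_ge0.
apply/rowP => j; rewrite mxE.
have /H := mem_index_enum j; rewrite /= -expr2 sqrf_eq0 => /eqP.
by move=> ->.
Qed.

Definition dotE := (dotDl, dotDr, dotNl, dotNr, dotZl, dotZr).

Lemma enormE x : enorm x = Num.sqrt (dot x x).
Proof. by rewrite /enorm /dot; congr Num.sqrt; apply: eq_bigr => i _; rewrite expr2. Qed.

Lemma enorm_le1 x : (enorm x <= 1) = (dot x x <= 1).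
Proof. by rewrite enormE -[X in _ <= X]sqrtr1 ler_sqrt. Qed.

Lemma cdualP A z : cdual A z <-> forall x, A x -> dot (z - x) (z - x) <= 1.
Proof.
split => [H x Ax|H x Ax]; first by have := H x Ax; rewrite /cball /= enorm_le1.
by rewrite /cball /= enorm_le1; apply: H.
Qed.

Lemma dot_sym_sub x y : dot (x - y) (x - y) = dot (y - x) (y - x).
Proof. by rewrite -(opprB y x) dotNl dotNr opprK. Qed.

Lemma cdual_anti A B : A `<=` B -> cdual B `<=` cdual A.
Proof. by move=> AB z /cdualP H; apply/cdualP => x /AB; apply: H. Qed.

Lemma sub_cdual2 A : A `<=` cdual (cdual A).
Proof. by move=> a Aa; apply/cdualP => z /cdualP H; rewrite dot_sym_sub; apply: H. Qed.

Lemma cdual3 A : cdual (cdual (cdual A)) = cdual A.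
Proof.
apply/seteqP; split; last exact: sub_cdual2.
exact/cdual_anti/sub_cdual2.
Qed.

Lemma bbP (K : set 'rV[R]_n) : ball_body K -> cdual (cdual K) = K.
Proof. by case=> A ->; rewrite cdual3. Qed.

Lemma cdual0 : cdual (set0 : set 'rV[R]_n) = setT.
Proof. by apply/seteqP; split => // z _; apply/cdualP. Qed.

Lemma dot_conv X Y t : dot X X <= 1 -> dot Y Y <= 1 -> 0 <= t <= 1 ->
  dot ((1 - t) *: X + t *: Y) ((1 - t) *: X + t *: Y) <= 1.
Proof.
move=> hX hY /andP[t0 t1].
have h := dot_ge0 (X - Y).
move: h; rewrite !dotE (dotC Y X) => h.
set a := dot X X in hX h *; set b := dot X Y in h *; set c := dot Y Y in hY h *.
have ht : 0 <= t * (1 - t) by apply: mulr_ge0; lra.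
nra.
Qed.

Lemma minkP a (K T : set 'rV[R]_n) b z : mink a K b T z <->
  exists x y, [/\ K x, T y & z = a *: x + b *: y].
Proof.
split; first by case=> x Kx [y Ty <-]; exists x, y.
by case=> x [y [Kx Ty ->]]; exists x => //; exists y.
Qed.


Lemma key_scalar (cc cw cu ww wu nu eta : R) :
  cc <= 1 -> ww + 2 * cw + cc <= 1 -> 0 <= cc - 2 * cu + 1 ->
  0 <= nu -> 0 <= eta -> 0 <= 1 + eta - nu ->
  2 * eta + nu ^+ 2 * ww + 2 * nu * eta * wu + eta ^+ 2 - nu * ww <= 0 ->
  nu ^+ 2 * ww + 2 * nu * eta * wu + eta ^+ 2 + 2 * nu * cw + 2 * eta * cu + cc <= 1.
Proof.
move=> h1 h2 h3 hnu heta hmu hE.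
have t1 : 0 <= (1 + eta - nu) * (1 - cc) by apply: mulr_ge0; lra.
have t2 : 0 <= nu * (1 - (ww + 2 * cw + cc)) by apply: mulr_ge0; lra.
have t3 : 0 <= eta * (cc - 2 * cu + 1) by apply: mulr_ge0.
nra.
Qed.

Lemma sbl K (p u : 'rV[R]_n) : cdual (cdual K) `<=` K -> cdual K p -> dot u u = 1 ->
  (forall z, cdual K z -> dot u z <= dot u p) -> K (p - u).
Proof.
move=> cK Pp uu pmax; apply: cK; apply/cdualP => s Ps.
rewrite leNgt; apply/negP => hs.
have [w sE] : exists w, s = p + w by exists (s - p); rewrite addrC subrK.
subst s.
have wu : dot u w <= 0.
  have := pmax _ Ps; rewrite !dotE; lra.
have e : p - u - (p + w) = - (w + u) by apply/rowP => i; rewrite !mxE; ring.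
move: hs; rewrite e !dotE uu => hs.
move: hs; rewrite (dotC w u) => hs.
set q := dot w w in hs; set g := dot u w in wu hs.
have q0 : 0 < q by lra.
pose m := (q - 2 * g) / 4.
have m0 : 0 <= m by rewrite /m; apply: divr_ge0; lra.
have qm0 : 0 < q + m ^+ 2 by have := sqr_ge0 m; lra.
pose nu := (q + 2 * g) / (2 * (q + m ^+ 2)).
have nu0 : 0 < nu by rewrite /nu; apply: divr_gt0; lra.
have nuq : nu * (q + m ^+ 2) = (q + 2 * g) / 2.
  rewrite /nu; field; lra.
pose eta := nu * m.
have eta0 : 0 <= eta by rewrite /eta; apply: mulr_ge0 => //; lra.
have nuh : nu <= 1 / 2.
  have : nu * (q + m ^+ 2) <= (1/2) * (q + m ^+ 2).
    rewrite nuq; have := sqr_ge0 m; lra.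
  by rewrite ler_pM2r.
have hE : 2 * eta + nu ^+ 2 * q + 2 * nu * eta * g + eta ^+ 2 - nu * q <= 0.
  have -> : 2 * eta + nu ^+ 2 * q + 2 * nu * eta * g + eta ^+ 2 - nu * q
     = nu * (nu * (q + m ^+ 2) + 2 * nu * m * g - (q - 2 * m)) by rewrite /eta; ring.
  rewrite nuq.
  have -> : (q + 2 * g) / 2 + 2 * nu * m * g - (q - 2 * m) = 2 * nu * m * g.
    by rewrite /m; field.
  have : 0 <= nu * m * (- g) by apply: mulr_ge0; [apply: mulr_ge0|]; lra.
  nra.
pose x := nu *: w + eta *: u.
have Px : cdual K (p + x).
  apply/cdualP => k Kk.
  have /cdualP/(_ k Kk) := Pp; have /cdualP/(_ k Kk) := Ps.
  have -> : p + w - k = w + (p - k) by apply/rowP => i; rewrite !mxE; ring.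
  have -> : p + x - k = x + (p - k) by apply/rowP => i; rewrite !mxE; ring.
  have := dot_ge0 ((p - k) - u).
  rewrite /x; move: (p - k) => c.
  rewrite !dotE ?(dotC w c) ?(dotC u c) ?(dotC w u) uu -/g -/q.
  move=> h3 h2 h1.
  have := @key_scalar (dot c c) (dot c w) (dot c u) q g nu eta.
  rewrite -/eta.
  move=> H; have h2' : q + 2 * dot c w + dot c c <= 1 by lra.
  have h3' : 0 <= dot c c - 2 * dot c u + 1 by lra.
  have hnu : 0 <= nu by lra.
  have hmu : 0 <= 1 + eta - nu by lra.
  have HH := H h1 h2' h3' hnu eta0 hmu hE.
  apply: le_trans HH; rewrite le_eqVlt; apply/orP; left; apply/eqP; ring.
have := pmax _ Px; rewrite /x !dotE uu -/g.
have : 0 < nu * (g + m) by apply: mulr_gt0 => //; rewrite /m; lra.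
rewrite /eta; lra.
Qed.


Lemma scalar_small (A B : R) : 0 <= B ->
  (forall t, 0 < t <= 1 -> 2 * t * A <= t ^+ 2 * B) -> A <= 0.
Proof.
move=> B0 H; rewrite leNgt; apply/negP => A0.
pose t := A / (A + B).
have tAB : t * (A + B) = A by rewrite /t; field; lra.
have t0 : 0 < t by rewrite /t; apply: divr_gt0; lra.
have t1 : t <= 1 by rewrite /t ler_pdivrMr; lra.
have := H t; rewrite t0 t1 => /(_ isT).
nra.
Qed.

Lemma convex_cdual K x y t : cdual K x -> cdual K y -> 0 <= t <= 1 ->
  cdual K ((1 - t) *: x + t *: y).
Proof.
move=> /cdualP hx /cdualP hy ht; apply/cdualP => k Kk.
have -> : (1 - t) *: x + t *: y - k = (1 - t) *: (x - k) + t *: (y - k).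
  by apply/rowP => i; rewrite !mxE; ring.
by apply: dot_conv => //; [apply: hx|apply: hy].
Qed.

Lemma contD (T : topologicalType) (a b : T -> R) :
  continuous a -> continuous b -> continuous (fun t => a t + b t).
Proof. by move=> ca cb t; apply: cvgD; [exact: ca|exact: cb]. Qed.

Lemma contM (T : topologicalType) (a b : T -> R) :
  continuous a -> continuous b -> continuous (fun t => a t * b t).
Proof. by move=> ca cb t; apply: cvgM; [exact: ca|exact: cb]. Qed.

Lemma cont_dot (T : topologicalType) (f g : T -> 'rV[R]_n) :
  (forall i, continuous (fun t => f t 0 i)) ->
  (forall i, continuous (fun t => g t 0 i)) -> continuous (fun t => dot (f t) (g t)).
Proof.
move=> cf cg.
suff H : forall s : seq 'I_n, continuous (fun t => \sum_(i <- s) f t 0 i * g t 0 i).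
  exact: H.
elim=> [|i s IH].
  by under eq_fun do rewrite big_nil; exact: cst_continuous.
under eq_fun do rewrite big_cons.
apply: contD; last exact: IH.
by apply: contM.
Qed.

Lemma closed_cdual K : closed (cdual K).
Proof.
apply: closed_bigI => k _.
have -> : cball k 1 = (fun z => dot (z - k) (z - k)) @^-1` [set x | x <= 1].
  by apply/seteqP; split => z /=; rewrite /cball /= enorm_le1.
have hc : closed [set x : R | x <= 1] := @closed_le R 1.
have ck : forall i, continuous (fun z : 'rV[R]_n => (z - k) 0 i).
  move=> i; under eq_fun do rewrite !mxE.
  apply: contD; first exact: coord_continuous.
  exact: cst_continuous.
have := proj1 (continuous_closedP _) (@cont_dot _ _ _ ck ck).
by move=> /(_ _ hc).
Qed.

Lemma coord_le1 x j : dot x x <= 1 -> `|x 0 j| <= 1.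
Proof.
move=> h.
have : x 0 j * x 0 j <= 1.
  apply: le_trans h; rewrite /dot (bigD1 j) //= lerDl.
  by apply: sumr_ge0 => i _; rewrite -expr2 sqr_ge0.
rewrite ler_norml => h2; apply/andP; split; nra.
Qed.

Lemma bounded_cdual K k : K k -> bounded_set (cdual K).
Proof.
move=> Kk.
rewrite /bounded_set /= /bounded_near.
apply: filterS (nbhs_pinfty_ge (num_real (`|k| + 1))) => M hM z /cdualP /(_ k Kk) hz.
apply: le_trans hM.
have -> : z = k + (z - k) by rewrite addrC subrK.
apply: le_trans (ler_normD _ _) _; rewrite lerD2l.
have -> : `|z - k| = mx_norm (z - k) by [].
rewrite mx_normrE.
apply: bigmax_le => // ij _.
by rewrite (ord1 ij.1); apply: coord_le1.
Qed.

Lemma compact_cdual K k : K k -> compact (cdual K).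
Proof.
move=> Kk; apply: bounded_closed_compact; last exact: closed_cdual.
exact: bounded_cdual Kk.
Qed.
Lemma contB (T : topologicalType) (a b : T -> R) :
  continuous a -> continuous b -> continuous (fun t => a t - b t).
Proof. by move=> ca cb t; apply: cvgB; [exact: ca|exact: cb]. Qed.

Lemma maxdir (r d : 'rV[R]_n) (a : R) : 0 < a ->
  (forall t, 0 < t <= 1 -> dot r r <= dot (r - (t * a) *: d) (r - (t * a) *: d)) ->
  dot r d <= 0.
Proof.
move=> a0 H.
have : a * dot r d <= 0.
  apply: (@scalar_small _ (a ^+ 2 * dot d d)).
    by apply: mulr_ge0; [apply: sqr_ge0|apply: dot_ge0].
  move=> t ht; have := H t ht; rewrite !dotE (dotC d r).
  nra.
by rewrite pmulr_rle0.
Qed.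

Lemma cont_fst i : continuous (fun c : 'rV[R]_n * 'rV[R]_n => c.1 0 i).
Proof.
move=> c; apply: (@continuous_comp _ _ _ fst (fun v : 'rV[R]_n => v 0 i)).
  exact: cvg_fst.
exact: coord_continuous.
Qed.

Lemma cont_snd i : continuous (fun c : 'rV[R]_n * 'rV[R]_n => c.2 0 i).
Proof.
move=> c; apply: (@continuous_comp _ _ _ snd (fun v : 'rV[R]_n => v 0 i)).
  exact: cvg_snd.
exact: coord_continuous.
Qed.

Lemma hard K T (l : R) (y k0 t0 : 'rV[R]_n) :
  cdual (cdual K) = K -> cdual (cdual T) = T -> K k0 -> T t0 ->
  cdual K !=set0 -> cdual T !=set0 -> 0 < l < 1 ->
  cdual (mink (1 - l) K l T) y -> mink (1 - l) (cdual K) l (cdual T) y.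
Proof.
move=> KK TT Kk0 Tt0 [p0 Pp0] [q0 Qq0] /andP[l0 l1] yM.
pose F (c : 'rV[R]_n * 'rV[R]_n) :=
  dot (y - ((1 - l) *: c.1 + l *: c.2)) (y - ((1 - l) *: c.1 + l *: c.2)).
have cF : continuous F.
  have ci : forall i, continuous
      (fun c : 'rV[R]_n * 'rV[R]_n => (y - ((1 - l) *: c.1 + l *: c.2)) 0 i).
    move=> i; under eq_fun do rewrite !mxE.
    apply: contB; first exact: cst_continuous.
    apply: contD; (apply: contM; first exact: cst_continuous).
      exact: cont_fst.
    exact: cont_snd.
  exact: (@cont_dot _ _ _ ci ci).
have [c cPQ cmin] : exists2 c, c \in cdual K `*` cdual T &
    forall t, t \in cdual K `*` cdual T -> F c <= F t.
  apply: compact_EVT_min.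
  - by exists (p0, q0).
  - by apply: compact_setX; [exact: compact_cdual Kk0|exact: compact_cdual Tt0].
  - exact: continuous_subspaceT.
case: c cPQ cmin => p w; rewrite inE => -[/= Pp Qw] cmin.
have [r rE] : exists r, r = y - ((1 - l) *: p + l *: w) by eexists.
have Fpw : F (p, w) = dot r r by rewrite rE.
have [r0|rpos] := eqVneq (dot r r) 0.
  apply/minkP; exists p, w; split => //.
  by move/dot_eq0: r0 => /eqP; rewrite rE subr_eq0 => /eqP.
have rr0 : 0 < dot r r by rewrite lt_neqAle eq_sym rpos dot_ge0.
pose s := Num.sqrt (dot r r).
have s0 : 0 < s by rewrite sqrtr_gt0.
have ss : s ^+ 2 = dot r r by rewrite sqr_sqrtr // dot_ge0.
have [u uE] : exists u, u = s^-1 *: r by eexists.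
have ru : r = s *: u by rewrite uE scalerA mulfV ?gt_eqF // scale1r.
have uu : dot u u = 1.
  by rewrite uE !dotE -ss; field; rewrite gt_eqF.
have maxP : forall z, cdual K z -> dot u z <= dot u p.
  move=> z Pz.
  have : dot r (z - p) <= 0.
    apply: (@maxdir _ _ (1 - l)); first lra.
    move=> t /andP[tp t1].
    have ht : 0 <= t <= 1 by apply/andP; split; lra.
    have hm : ((1 - t) *: p + t *: z, w) \in cdual K `*` cdual T.
      by rewrite inE; split => //=; apply: convex_cdual.
    have := cmin _ hm; rewrite Fpw /F /=.
    suff -> : y - ((1 - l) *: ((1 - t) *: p + t *: z) + l *: w) = r - (t * (1 - l)) *: (z - p) by [].
    by rewrite rE; apply/rowP => i; rewrite !mxE; ring.
  rewrite ru !dotE => h.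
  have : s * (dot u z - dot u p) <= 0 by lra.
  by rewrite pmulr_rle0 // subr_le0.
have maxQ : forall z, cdual T z -> dot u z <= dot u w.
  move=> z Qz.
  have : dot r (z - w) <= 0.
    apply: (@maxdir _ _ l) => // t /andP[tp t1].
    have ht : 0 <= t <= 1 by apply/andP; split; lra.
    have hm : (p, (1 - t) *: w + t *: z) \in cdual K `*` cdual T.
      by rewrite inE; split => //=; apply: convex_cdual.
    have := cmin _ hm; rewrite Fpw /F /=.
    suff -> : y - ((1 - l) *: p + l *: ((1 - t) *: w + t *: z)) = r - (t * l) *: (z - w) by [].
    by rewrite rE; apply/rowP => i; rewrite !mxE; ring.
  rewrite ru !dotE => h.
  have : s * (dot u z - dot u w) <= 0 by lra.
  by rewrite pmulr_rle0 // subr_le0.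
have Kpu : K (p - u) by apply: sbl Pp uu maxP; rewrite KK.
have Twu : T (w - u) by apply: sbl Qw uu maxQ; rewrite TT.
have /cdualP/(_ ((1 - l) *: (p - u) + l *: (w - u))) := yM.
have -> : y - ((1 - l) *: (p - u) + l *: (w - u)) = (s + 1) *: u.
  have : y = r + ((1 - l) *: p + l *: w) by rewrite rE subrK.
  move=> ->; rewrite ru; apply/rowP => i; rewrite !mxE; ring.
rewrite !dotE uu => /(_ _) H.
exfalso.
have : (s + 1) * ((s + 1) * 1) <= 1.
  by apply: H; apply/minkP; exists (p - u), (w - u).
nra.
Qed.


Lemma easy K T (l : R) : 0 <= l <= 1 ->
  mink (1 - l) (cdual K) l (cdual T) `<=` cdual (mink (1 - l) K l T).
Proof.
move=> hl z /minkP[a [b [Pa Qb ->]]]; apply/cdualP => m /minkP[k [t [Kk Tt ->]]].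
have -> : (1 - l) *: a + l *: b - ((1 - l) *: k + l *: t) =
    (1 - l) *: (a - k) + l *: (b - t) by apply/rowP => i; rewrite !mxE; ring.
apply: dot_conv => //; [move/cdualP: Pa; apply|move/cdualP: Qb; apply] => //.
Qed.

Lemma goal1 K T (l : R) :
  cdual (cdual K) = K -> cdual (cdual T) = T -> K !=set0 -> T !=set0 ->
  cdual K !=set0 -> cdual T !=set0 -> 0 < l < 1 ->
  cdual (mink (1 - l) K l T) = mink (1 - l) (cdual K) l (cdual T).
Proof.
move=> KK TT [k0 Kk0] [t0 Tt0] P0 Q0 hl.
apply/seteqP; split; last by apply: easy; case/andP: hl => *; apply/andP; split; lra.
by move=> y; apply: (@hard _ _ _ y _ _ KK TT Kk0 Tt0 P0 Q0 hl).
Qed.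

Lemma ne0 (A : set 'rV[R]_n) : A <> set0 -> A !=set0.
Proof. by move=> h; apply/set0P/eqP. Qed.

End Dot.

Theorem theorem1p19 (R : realType) (n : nat) (K T : set 'rV[R]_n) (l : R) :
  (1 <= n)%N ->
  ball_body K -> K <> set0 -> K <> setT ->
  ball_body T -> T <> set0 -> T <> setT ->
  0 < l < 1 ->
  ball_body (mink (1 - l) K l T) /\
  cdual (mink (1 - l) K l T) = mink (1 - l) (cdual K) l (cdual T).
Proof.
move=> _ bK K0 KT bT T0 TT hl.
have KK := @bbP _ _ _ bK; have TT' := @bbP _ _ _ bT.
have PN : cdual K <> set0 by move=> h; apply: KT; rewrite -KK h (@cdual0 R n).
have QN : cdual T <> set0 by move=> h; apply: TT; rewrite -TT' h (@cdual0 R n).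
have G := @goal1 _ _ _ _ _ KK TT' (@ne0 _ _ _ K0) (@ne0 _ _ _ T0) (@ne0 _ _ _ PN) (@ne0 _ _ _ QN) hl.
split => //.
exists (mink (1 - l) (cdual K) l (cdual T)).
rewrite (@goal1 _ _ _ _ _ (@cdual3 _ _ K) (@cdual3 _ _ T) (@ne0 _ _ _ PN) (@ne0 _ _ _ QN)) ?KK ?TT' //; exact: (@ne0 _ _ _).
Qed.
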